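(* Let $\Delta_0\subset\mathbb{R}^d$ be the vertex set of a regular simplex of edge length $1$ with centroid at the origin. There exists $\varepsilon_0>0$ such that for every $\tau\in\mathbb{R}^d$ and $R\in O(d)$ with $\|\tau\|_2+\|R-I_d\|_2\le\varepsilon_0$, writing $\Delta'=\{Rx+\tau: x\in\Delta_0\}$, \[ \mathrm{dist}_H(\Delta_0,\Delta')\;\le\; d^2(d+1)\,\bigl(\mathrm{diam}(\Delta_0\cup\Delta')-1\bigr). \]
   Context: A regular simplex of edge length $1$ is given by its vertex set: $d+1$ points at pairwise distance exactly $1$. $\|\cdot\|_2$ on matrices is the operator norm. $\mathrm{diam}(A)=\sup_{x,y\in A}\|x-y\|_2$. For nonempty compact $A,B\subset\mathbb{R}^d$, $\mathrm{dist}_H(A,B)=\max\{\sup_{a\in A}\inf_{b\in B}\|a-b\|_2,\ \sup_{b\in B}\inf_{a\in A}\|a-b\|_2\}$. *)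

(* Defs.v *)
From HB Require Import structures.
From mathcomp Require Import all_boot all_order all_algebra.
From mathcomp Require Import boolp classical_sets reals.
Set Implicit Arguments. Unset Strict Implicit. Unset Printing Implicit Defensive.
Import Order.TTheory GRing.Theory Num.Theory.
Local Open Scope ring_scope.
Local Open Scope classical_set_scope.

Section Defs.
Variable R : realType.

Definition enorm (d : nat) (x : 'cV[R]_d) : R :=
  Num.sqrt (\sum_(i < d) x i ord0 ^+ 2).

Definition opnorm (d : nat) (A : 'M[R]_d) : R :=
  sup [set enorm (A *m x) | x in [set x : 'cV[R]_d | enorm x <= 1]].

Definition orthogonal_mx (d : nat) (Q : 'M[R]_d) : Prop := Q^T *m Q = 1%:M.

Definition diam (d : nat) (A : set 'cV[R]_d) : R :=
  sup [set enorm (x - y) | x in A & y in A].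

Definition hexcess (d : nat) (A B : set 'cV[R]_d) : R :=
  sup [set inf [set enorm (a - b) | b in B] | a in A].

Definition distH (d : nat) (A B : set 'cV[R]_d) : R :=
  Num.max (hexcess A B) (hexcess B A).

Definition regular_unit_simplex (d : nat) (v : 'I_d.+1 -> 'cV[R]_d) : Prop :=
  forall i j, i != j -> enorm (v i - v j) = 1.

Definition centroid_zero (d : nat) (v : 'I_d.+1 -> 'cV[R]_d) : Prop :=
  \sum_(i < d.+1) v i = 0.

End Defs.

(* Main.v *)
Require Import Defs.
From HB Require Import structures.
From mathcomp Require Import all_boot all_order all_algebra.
From mathcomp Require Import boolp classical_sets reals.
From mathcomp Require Import ring lra.
Import Order.TTheory GRing.Theory Num.Theory.
Local Open Scope ring_scope.
Local Open Scope classical_set_scope.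

Set Implicit Arguments. Unset Strict Implicit.
Section Aux.
Variable R : realType.
Variable d : nat.
Implicit Types x y z : 'cV[R]_d.

Definition dot x y : R := \sum_i x i ord0 * y i ord0.

Lemma dotE x y : dot x y = (x^T *m y) ord0 ord0.
Proof. by rewrite /dot !mxE; apply: eq_bigr => i _; rewrite mxE. Qed.

Lemma dotC x y : dot x y = dot y x.
Proof. by apply: eq_bigr => i _; rewrite mulrC. Qed.

Lemma dotDl x y z : dot (x + y) z = dot x z + dot y z.
Proof. by rewrite /dot -big_split; apply: eq_bigr => i _; rewrite mxE mulrDl. Qed.

Lemma dotNl x y : dot (- x) y = - dot x y.
Proof. by rewrite /dot -sumrN; apply: eq_bigr => i _; rewrite mxE mulNr. Qed.

Lemma dotDr x y z : dot z (x + y) = dot z x + dot z y.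
Proof. by rewrite dotC dotDl !(dotC z). Qed.

Lemma dotNr x y : dot y (- x) = - dot y x.
Proof. by rewrite dotC dotNl dotC. Qed.

Lemma dotBl x y z : dot (x - y) z = dot x z - dot y z.
Proof. by rewrite dotDl dotNl. Qed.

Lemma dotBr x y z : dot z (x - y) = dot z x - dot z y.
Proof. by rewrite dotDr dotNr. Qed.

Lemma dot_ge0 x : 0 <= dot x x.
Proof. by apply: sumr_ge0 => i _; rewrite -expr2 sqr_ge0. Qed.

Lemma enorm_sq x : enorm x ^+ 2 = dot x x.
Proof.
rewrite /enorm sqr_sqrtr; last by apply: sumr_ge0 => i _; rewrite sqr_ge0.
by apply: eq_bigr => i _; rewrite expr2.
Qed.

Lemma enormE x : enorm x = Num.sqrt (dot x x).
Proof. by rewrite -enorm_sq sqrtr_sqr ger0_norm // sqrtr_ge0. Qed.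

Lemma enorm_ge0 x : 0 <= enorm x.
Proof. exact: sqrtr_ge0. Qed.

Lemma enormN x : enorm (- x) = enorm x.
Proof. by rewrite !enormE dotNl dotNr opprK. Qed.

Lemma enorm_le x a : 0 <= a -> dot x x <= a ^+ 2 -> enorm x <= a.
Proof.
move=> a0 h; rewrite -(ger0_norm a0) -sqrtr_sqr enormE.
by rewrite ler_sqrt // sqr_ge0.
Qed.

Lemma dot_sumr x n (y : 'I_n -> 'cV[R]_d) :
  dot x (\sum_(j < n) y j) = \sum_(j < n) dot x (y j).
Proof.
rewrite dotE mulmx_sumr summxE; apply: eq_bigr => j _; by rewrite dotE.
Qed.

Lemma dot_orth (Q : 'M[R]_d) x y : orthogonal_mx Q -> dot (Q *m x) (Q *m y) = dot x y.
Proof.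
move=> hQ; rewrite !dotE trmx_mul -mulmxA (mulmxA Q^T) hQ mul1mx //.
Qed.

Lemma dot_expand x y : dot (x + y) (x + y) = dot x x + 2 * dot x y + dot y y.
Proof. rewrite dotDl !dotDr (dotC y x); ring. Qed.

End Aux.

Section Gram.
Variable R : realType.
Variable d : nat.

Lemma gram_bound (u : 'I_d -> 'cV[R]_d) :
  (forall k k', dot (u k) (u k') = (1 + (k == k')%:R) / 2) ->
  forall x : 'cV[R]_d, dot x x <= 2 * \sum_k (dot (u k) x) ^+ 2.
Proof.
move=> hu x.
pose U : 'M[R]_d := \matrix_(k, l) u k l ord0.
pose J : 'M[R]_d := const_mx 1.
pose c : R := (d.+1%:R)^-1.
pose Hinv : 'M[R]_d := 2 *: (1%:M - c *: J).
have HU : U *m U^T = 2^-1 *: (1%:M + J).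
  apply/matrixP => k k'; rewrite /U /J !mxE.
  transitivity (dot (u k) (u k')); first by apply: eq_bigr => l _; rewrite !mxE.
  by rewrite hu mulrC addrC.
have JJ : J *m J = d%:R *: J.
  apply/matrixP => k k'; rewrite /J !mxE.
  under eq_bigr do rewrite !mxE mulr1.
  by rewrite sumr_const card_ord mulr1.
have UP : U *m (U^T *m Hinv) = 1%:M.
  rewrite mulmxA HU /Hinv -scalemxAr -scalemxAl scalerA mulfV ?scale1r; last by rewrite pnatr_eq0.
  rewrite mulmxDl mul1mx mulmxBr mulmx1 -scalemxAr JJ scalerA.
  have h : d.+1%:R != 0 :> R by rewrite pnatr_eq0.
  have e : 1 - c - c * d%:R = 0.
    rewrite /c -natr1; field; rewrite natr1 //.
  apply/matrixP => k k'; rewrite /J !mxE.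
  rewrite mulr1; lra.
have PU := mulmx1C UP.
pose b := U *m x.
have xe : x = (U^T *m Hinv) *m b by rewrite /b mulmxA PU mul1mx.
have hb : forall k, b k ord0 = dot (u k) x.
  by move=> k; rewrite /b /U !mxE; apply: eq_bigr => l _; rewrite !mxE.
have e1 : dot x x = (b^T *m Hinv *m b) ord0 ord0.
  rewrite dotE {2}xe !mulmxA -trmx_mul //.
rewrite e1.
pose ones : 'cV[R]_d := const_mx 1.
have Je : J = ones *m ones^T.
  by apply/matrixP => k k'; rewrite /J /ones !mxE big_ord1 !mxE mulr1.
set s := b^T *m ones.
have hs : (b^T *m J *m b) ord0 ord0 = s ord0 ord0 ^+ 2.
  rewrite Je mulmxA -mulmxA -/s -[ones^T *m b]trmxK trmx_mul trmxK -/s.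
  by rewrite !mxE big_ord1 !mxE expr2.
have -> : (b^T *m Hinv *m b) ord0 ord0 = 2 * (dot b b - c * s ord0 ord0 ^+ 2).
  rewrite /Hinv -scalemxAr -scalemxAl mxE mulmxBr mulmx1 -scalemxAr mulmxBl mxE.
  rewrite -scalemxAl -hs -dotE; set t := b^T *m J *m b; by rewrite !mxE.
have cs : 0 <= c * s ord0 ord0 ^+ 2 by rewrite mulr_ge0 ?sqr_ge0 // invr_ge0 ler0n.
have -> : dot b b = \sum_k (dot (u k) x) ^+ 2.
  by apply: eq_bigr => k _; rewrite hb expr2.
lra.
Qed.

End Gram.

Section Core.
Variable R : realType.
Variable d : nat.

Lemma dot_expandB (x y : 'cV[R]_d) :
  dot (x - y) (x - y) = dot x x - 2 * dot x y + dot y y.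
Proof. rewrite dot_expand dotNr dotNl dotNr opprK; ring. Qed.

Lemma core (v w : 'I_d.+1 -> 'cV[R]_d) (i : 'I_d.+1) (m eta : R) :
  (forall j k, j != k -> dot (v j - v k) (v j - v k) = 1) ->
  (forall j k, j != k -> dot (v j + w j - (v k + w k)) (v j + w j - (v k + w k)) = 1) ->
  (forall j, dot (w j) (w j) <= m ^+ 2) -> dot (w i) (w i) = m ^+ 2 ->
  (forall j k, j != k -> dot (v j + w j - v k) (v j + w j - v k) - 1 <= eta) ->
  m ^+ 2 <= 2 * (d%:R * ((eta + 3 * m ^+ 2) / 2) ^+ 2).
Proof.
move=> hv hv' hw hwi hf.
pose u k := v i - v (lift i k).
have hg : forall k k', dot (u k) (u k') = (1 + (k == k')%:R) / 2.
  move=> k k'; case: (boolP (k == k')) => [/eqP <-|nkk].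
    by rewrite /u hv ?neq_lift // /=; field.
  have e1 := hv i (lift i k) (neq_lift _ _).
  have e2 := hv i (lift i k') (neq_lift _ _).
  have e3 : dot (u k - u k') (u k - u k') = 1.
    have -> : u k - u k' = v (lift i k') - v (lift i k).
      by rewrite /u opprB addrC addrA subrK.
    apply: hv; apply: contra nkk => /eqP /lift_inj ->; done.
  rewrite dot_expandB -/(u k) -/(u k') in e3.
  rewrite /u in e3 e1 e2 *. rewrite e1 e2 in e3.
  rewrite /=; lra.
have hb := @gram_bound R d u hg (w i).
rewrite -{1}hwi; apply: (le_trans hb); rewrite ler_pM2l //.
rewrite mulr_natl -[in leRHS](card_ord d) -sumr_const; apply: ler_sum => k _.
set b := dot (u k) (w i).
set j := lift i k.
have nij : i != j := neq_lift _ _.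
have f1 := hf i j nij.
have nji : j != i by rewrite eq_sym.
have f2 := hf j i nji.
have f3 := hv' i j nij.
have ex1 : v i + w i - v j = u k + w i by rewrite /u addrAC.
have ex2 : v j + w j - v i = w j - u k by rewrite /u opprB addrA (addrC (w j)).
have ex3 : v i + w i - (v j + w j) = u k + (w i - w j).
  by rewrite /u opprD addrACA.
rewrite ex1 dot_expand hv // -/b hwi in f1.
rewrite ex2 dot_expandB (dotC _ (u k)) hv // in f2.
rewrite ex3 dot_expand dotBr -/b dot_expandB hv // hwi in f3.
have f4 := dot_ge0 (w i + w j).
rewrite dot_expand hwi in f4.
have f5 := hw j.
have m0 : 0 <= m ^+ 2 by rewrite sqr_ge0.
have lo : - ((eta + 3 * m ^+ 2) / 2) <= b by lra.
have hi : b <= (eta + 3 * m ^+ 2) / 2 by lra.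
nra.
Qed.

End Core.

Lemma final_arith (R : realFieldType) (dn K m eta Dm eps : R) :
  1 <= dn -> 2 * dn ^+ 2 <= K -> 0 <= m -> m <= 2 * eps -> eps * (120 * dn ^+ 2) <= 1 ->
  1 <= Dm -> eta = Dm ^+ 2 - 1 -> m ^+ 2 <= 2 * (dn * ((eta + 3 * m ^+ 2) / 2) ^+ 2) ->
  m <= K * (Dm - 1).
Proof.
move=> d1 hK m0 me he D1 he' hm.
have dd : 1 <= dn ^+ 2 by nra.
have K2 : 2 <= K by nra.
have m60 : m * (60 * dn ^+ 2) <= 1 by nra.
have m60' : m <= 1 / 60 by nra.
case: (lerP (3/2) Dm) => hD.
  nra.
rewrite leNgt; apply/negP => hlt.
set e := Dm - 1.
have e0 : 0 <= e by rewrite /e; lra.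
have e1 : 2 * dn ^+ 2 * e < m.
  have : 0 <= (K - 2 * dn ^+ 2) * e by apply: mulr_ge0; lra.
  move=> h; rewrite -/e in hlt; lra.
have et : eta <= 5 / 2 * e by rewrite he' /e; nra.
have et0 : 0 <= eta by rewrite he'; nra.
set beta := (eta + 3 * m ^+ 2) / 2.
have b0 : 0 <= beta by rewrite /beta; nra.
have t1 : eta * dn ^+ 2 <= 5 / 4 * m by nra.
have t2 : 3 * m ^+ 2 * dn ^+ 2 <= m / 20 by nra.
have b1 : beta * dn ^+ 2 <= 13 / 20 * m by rewrite /beta; nra.
have b2 : (beta * dn ^+ 2) ^+ 2 <= (13 / 20 * m) ^+ 2.
  by rewrite ler_sqr ?nnegrE //; nra.
have mp : 0 < m by nra.
have d3 : 1 <= dn ^+ 3 by nra.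
have h3 : m ^+ 2 * dn ^+ 3 <= 2 * dn ^+ 4 * beta ^+ 2.
  rewrite -/beta in hm.
  have d30 : 0 <= dn ^+ 3 by lra.
  have := ler_wpM2r d30 hm.
  have -> : 2 * (dn * beta ^+ 2) * dn ^+ 3 = 2 * dn ^+ 4 * beta ^+ 2 by ring.
  done.
nra.
Qed.

Section Sets.
Variable R : realType.
Variable d : nat.

Lemma hexcess_le (A B : set 'cV[R]_d) m : A !=set0 ->
  (forall a, A a -> exists2 b, B b & enorm (a - b) <= m) -> hexcess A B <= m.
Proof.
move=> [a0 Aa0] h; apply: ge_sup.
  by exists (inf [set enorm (a0 - b) | b in B]); exists a0.
move=> z [a Aa <-].
have [b Bb hb] := h a Aa.
apply: le_trans hb.
apply: ge_inf; last by exists b.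
by exists 0 => y [b' _ <-]; apply: enorm_ge0.
Qed.

Lemma diam_ge (I : finType) (p : I -> 'cV[R]_d) (A : set 'cV[R]_d) x y :
  (forall z, A z -> exists k, z = p k) -> A x -> A y -> enorm (x - y) <= diam A.
Proof.
move=> hA Ax Ay; apply: sup_upper_bound.
  split; first by exists (enorm (x - y)); exists x => //; exists y.
  exists (\sum_k \sum_l enorm (p k - p l)) => z [x' Ax' [y' Ay' <-]].
  have [k ->] := hA _ Ax'; have [l ->] := hA _ Ay'.
  rewrite (bigD1 k) //= (bigD1 l) //= -addrA lerDl.
  apply: addr_ge0; apply: sumr_ge0 => i _; [exact: enorm_ge0 | apply: sumr_ge0 => j _; exact: enorm_ge0].
by exists x => //; exists y.
Qed.

Lemma opnorm_ge (M : 'M[R]_d) (x : 'cV[R]_d) B :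
  (forall y, enorm y <= 1 -> enorm (M *m y) <= B) -> enorm x <= 1 ->
  enorm (M *m x) <= opnorm M.
Proof.
move=> hB hx; apply: sup_upper_bound.
  split; first by exists (enorm (M *m x)); exists x.
  by exists B => z [y hy <-]; apply: hB.
by exists x.
Qed.

End Sets.

Lemma dot0r (R : realType) d (x : 'cV[R]_d) : dot x 0 = 0.
Proof. by rewrite /dot big1 // => i _; rewrite mxE mulr0. Qed.

Lemma vnorm_le1 (R : realType) d (v : 'I_d.+1 -> 'cV[R]_d) :
  regular_unit_simplex v -> centroid_zero v -> forall i, dot (v i) (v i) <= 1.
Proof.
move=> hreg hcen i.
have h : forall j, dot (v i - v j) (v i - v j) <= 1.
  move=> j; case: (boolP (i == j)) => [/eqP <-|nij].
    by rewrite subrr dot0r ler01.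
  by rewrite -enorm_sq hreg // expr1n.
have hs : \sum_j dot (v i - v j) (v i - v j) <= \sum_(j < d.+1) (1 : R).
  by apply: ler_sum => j _; apply: h.
have e : \sum_j dot (v i - v j) (v i - v j) =
   d.+1%:R * dot (v i) (v i) - 2 * dot (v i) (\sum_j v j) + \sum_j dot (v j) (v j).
  under eq_bigr do rewrite dot_expandB.
  by rewrite big_split /= sumrB sumr_const card_ord -mulr_sumr -dot_sumr !mulr_natl.
rewrite e hcen /centroid_zero dot0r sumr_const card_ord in hs.
have T0 : 0 <= \sum_(j < d.+1) dot (v j) (v j) by apply: sumr_ge0 => j _; apply: dot_ge0.
have dp : 0 < d.+1%:R :> R by rewrite ltr0n.
rewrite -mulr_natl mulr1 in hs.
nra.
Qed.

Unset Implicit Arguments.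
Theorem mainTheorem12 (R : realType) (d : nat) (v : 'I_d.+1 -> 'cV[R]_d)
  (hreg : regular_unit_simplex v) (hcen : centroid_zero v) :
  exists eps0 : R, 0 < eps0 /\
    forall (tau : 'cV[R]_d) (Q : 'M[R]_d),
      orthogonal_mx Q ->
      enorm tau + opnorm (Q - 1%:M) <= eps0 ->
      distH (range v) [set Q *m x + tau | x in range v]
        <= (d ^ 2 * d.+1)%:R
           * (diam (range v `|` [set Q *m x + tau | x in range v]) - 1).
Proof.
case: d v hreg hcen => [|d] v hreg hcen.
  exists 1; split => // tau Q _ _.
  have z : forall x : 'cV[R]_0, enorm x = 0 by move=> x; rewrite /enorm big_ord0 sqrtr0.
  rewrite mul0n mul0r /distH ge_max; apply/andP; split; apply: hexcess_le.
  - by exists (v ord0); exists ord0.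
  - move=> a [j _ <-]; exists (Q *m v j + tau); first by exists (v j) => //; exists j.
    by rewrite z.
  - by exists (Q *m v ord0 + tau); exists (v ord0) => //; exists ord0.
  - move=> a [x [j _ <-] <-]; exists (v j); first by exists j.
    by rewrite z.
pose dn : R := d.+1%:R.
have dn1 : 1 <= dn by rewrite /dn ler1n.
pose eps : R := 1 / (120 * dn ^+ 2).
have eps0 : 0 < eps by rewrite /eps; apply: divr_gt0 => //; nra.
exists eps; split => // tau Q hQ hsmall.
pose M := Q - 1%:M.
pose w j := M *m v j + tau.
have hv'e : forall j, Q *m v j + tau = v j + w j.
  by move=> j; rewrite /w /M mulmxBl mul1mx addrA addrCA subrr addr0.
have [i _ hi] := @arg_maxP _ _ _ ord0 xpredT (fun j => dot (w j) (w j)) isT.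
pose m := enorm (w i).
have m0 : 0 <= m := enorm_ge0 _.
have hwi : dot (w i) (w i) = m ^+ 2 by rewrite enorm_sq.
have hw : forall j, dot (w j) (w j) <= m ^+ 2 by move=> j; rewrite -hwi; apply: hi.
have hv : forall j k, j != k -> dot (v j - v k) (v j - v k) = 1.
  by move=> j k njk; rewrite -enorm_sq hreg // expr1n.
have hv' : forall j k, j != k ->
    dot (v j + w j - (v k + w k)) (v j + w j - (v k + w k)) = 1.
  move=> j k njk; rewrite -!hv'e.
  have -> : Q *m v j + tau - (Q *m v k + tau) = Q *m (v j - v k).
    by rewrite opprD addrACA subrr addr0 mulmxBr.
  by rewrite dot_orth // hv.
set U := range v `|` [set Q *m x + tau | x in range v].
pose p (bk : bool * 'I_d.+2) := if bk.1 then Q *m v bk.2 + tau else v bk.2.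
have hU : forall z, U z -> exists k, z = p k.
  move=> z [[j _ <-]|[x [j _ <-] <-]]; first by exists (false, j).
  by exists (true, j).
have Dge : forall x y, U x -> U y -> enorm (x - y) <= diam U.
  by move=> x y; apply: (@diam_ge R d.+1 _ p U x y hU).
have Uv : forall j, U (v j) by move=> j; left; exists j.
have Uv' : forall j, U (v j + w j) by move=> j; right; exists (v j); [exists j|rewrite hv'e].
have D1 : 1 <= diam U.
  have n01 : (ord0 : 'I_d.+2) != lift ord0 ord0 := neq_lift _ _.
  by rewrite -(hreg _ _ n01); apply: Dge.
have hf : forall j k, j != k -> dot (v j + w j - v k) (v j + w j - v k) - 1 <= diam U ^+ 2 - 1.
  move=> j k _; rewrite -enorm_sq lerD2r.
  have := Dge _ _ (Uv' j) (Uv k); have := enorm_ge0 (v j + w j - v k); nra.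
have hc := @core R d.+1 v w i m (diam U ^+ 2 - 1) hv hv' hw hwi hf.
have hB : forall y, enorm y <= 1 -> enorm (M *m y) <= 2.
  move=> y hy; apply: enorm_le => //.
  have hyy : dot y y <= 1 by rewrite -enorm_sq; have := enorm_ge0 y; nra.
  have e1 : M *m y = Q *m y - y by rewrite /M mulmxBl mul1mx.
  rewrite e1 dot_expandB dot_orth //.
  have := dot_ge0 (Q *m y + y); rewrite dot_expand dot_orth //; nra.
have vi1 : enorm (v i) <= 1 by apply: enorm_le => //; rewrite expr1n; apply: vnorm_le1.
have hop := @opnorm_ge R d.+1 M (v i) 2 hB vi1.
have me : m <= 2 * eps.
  have a0 := enorm_ge0 (M *m v i).
  have t0 := enorm_ge0 tau.
  have h1 : m ^+ 2 <= 2 * enorm (M *m v i) ^+ 2 + 2 * enorm tau ^+ 2.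
    rewrite -hwi !enorm_sq /w dot_expand.
    have := dot_ge0 (M *m v i - tau); rewrite dot_expandB; nra.
  nra.
have hd : distH (range v) [set Q *m x + tau | x in range v] <= m.
  rewrite /distH ge_max; apply/andP; split; apply: hexcess_le.
  - by exists (v ord0); exists ord0.
  - move=> a [j _ <-]; exists (Q *m v j + tau); first by exists (v j) => //; exists j.
    rewrite hv'e opprD addrA subrr add0r enormN.
    by apply: enorm_le => //; apply: hw.
  - by exists (Q *m v ord0 + tau); exists (v ord0) => //; exists ord0.
  - move=> a [x [j _ <-] <-]; exists (v j); first by exists j.
    rewrite hv'e addrC addrA (addrC (- v j)) subrr add0r.
    by apply: enorm_le => //; apply: hw.
apply: (le_trans hd).
have hK : 2 * dn ^+ 2 <= ((d.+1) ^ 2 * d.+2)%:R.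
  rewrite natrM natrX -/dn.
  have : 2 <= d.+2%:R :> R by rewrite ler_nat.
  have : 0 <= dn ^+ 2 by rewrite sqr_ge0.
  nra.
apply: (@final_arith R dn _ m _ (diam U) eps dn1 hK m0 me _ D1 erefl hc).
by rewrite /eps mul1r mulVf //; apply/eqP; nra.
Qed.
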